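(* Let $a=\log_2 3$. For integers $K\ge 1$ and $1\le\ell\le K$ define $g_K(\ell)=\max(0,\,a-K/\ell)$, let $S^+(K)=\{1\le\ell\le K: g_K(\ell)>0\}$, and define $\Theta_K=\max_{\ell\in S^+(K)}g_K(\ell)\,/\,\min_{\ell\in S^+(K)}g_K(\ell)$. Then: (1) $\max_{S^+(K)}g_K=a-1$, attained at $\ell=K$, and $\min_{S^+(K)}g_K=a-K/\ell_*(K)$ with $\ell_*(K)=\lfloor K/a\rfloor+1$. (2) Writing $K/a=\lfloor K/a\rfloor+r_K$ with $r_K\in(0,1)$, $$\Theta_K=\frac{a-1}{a}\cdot\frac{\lfloor K/a\rfloor+1}{1-r_K}.$$ (3) The sequence $(\Theta_K)$ is unbounded; along the numerators of the even-indexed convergents of the continued fraction of $\log_2 3$, $K\in\{3,19,84,1054,50508,176251,\ldots\}$, one has $r_K\to 1^-$ and $\Theta_K\to\infty$. *)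

(* Defs.v *)
From Stdlib Require Import Reals Lra Lia ZArith Arith List.
From Stdlib Require Export RList.
Open Scope R_scope.

Definition a : R := ln 3 / ln 2.

Definition g (K l : nat) : R := Rmax 0 (a - INR K / INR l).

Definition Splus (K : nat) : list nat :=
  filter (fun l => if Rlt_dec 0 (g K l) then true else false) (seq 1 K).

Definition gmax (K : nat) : R := MaxRlist (map (g K) (Splus K)).
Definition gmin (K : nat) : R := MinRlist (map (g K) (Splus K)).

Definition Theta (K : nat) : R := gmax K / gmin K.

Definition flr (K : nat) : Z := Int_part (INR K / a).
Definition rK (K : nat) : R := frac_part (INR K / a).

Definition lstar (K : nat) : nat := (Z.to_nat (flr K) + 1)%nat.

(* Regular continued fraction of a: complete quotients x_0 = a,
   x_{n+1} = 1/(x_n - floor x_n); partial quotients a_n = floor x_n. *)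
Fixpoint cf_rem (n : nat) : R :=
  match n with
  | O => a
  | S m => / (cf_rem m - IZR (Int_part (cf_rem m)))
  end.
Definition cf_quot (n : nat) : Z := Int_part (cf_rem n).

(* (p_n, p_{n-1}) with p_{-1} = 1, p_{-2} = 0, p_n = a_n p_{n-1} + p_{n-2} *)
Fixpoint cf_num_pair (n : nat) : Z * Z :=
  match n with
  | O => (cf_quot 0, 1%Z)
  | S m => let (x, y) := cf_num_pair m in ((cf_quot (S m) * x + y)%Z, x)
  end.
Definition cf_num (n : nat) : Z := fst (cf_num_pair n).

(* Main.v *)
Require Import Defs.
From Stdlib Require Import Reals ZArith Arith List Lra Lia RList.
Open Scope R_scope.

Lemma ln2_pos : 0 < ln 2.
Proof. pose proof ln_lt_2; lra. Qed.

Lemma ln3_gt : ln 2 < ln 3.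
Proof. apply ln_increasing; lra. Qed.

Lemma a_gt1 : 1 < a.
Proof.
  pose proof ln2_pos; pose proof ln3_gt. unfold a.
  replace 1 with (ln 2 / ln 2) by (field; lra).
  unfold Rdiv; apply Rmult_lt_compat_r; [apply Rinv_0_lt_compat|]; lra.
Qed.

Lemma irr_nat : forall pn qn : nat, (0 < qn)%nat -> a * INR qn <> INR pn.
Proof.
  intros pn qn Hq H.
  pose proof ln2_pos; pose proof ln3_gt; pose proof a_gt1.
  assert (Hq' : 0 < INR qn) by (apply lt_0_INR; lia).
  assert (Hp : pn <> 0%nat).
  { intro E; subst; simpl in H. nra. }
  assert (E1 : ln 3 * INR qn = INR pn * ln 2).
  { rewrite <- H; unfold a; field; lra. }
  assert (E2 : ln (3 ^ qn) = ln (2 ^ pn)) by (rewrite !ln_pow; lra).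
  apply ln_inv in E2; try (apply pow_lt; lra).
  assert (E3 : INR (3 ^ qn) = INR (2 ^ pn)).
  { rewrite !pow_INR. replace (INR 3) with 3 by (simpl; ring).
    replace (INR 2) with 2 by (simpl; ring). exact E2. }
  apply INR_eq in E3.
  apply (f_equal Nat.even) in E3.
  rewrite !Nat.even_pow in E3 by lia. simpl in E3. discriminate.
Qed.

Definition irr (x : R) := forall p q : Z, q <> 0%Z -> x * IZR q <> IZR p.

Lemma irr_a : irr a.
Proof.
  intros p q Hq E. pose proof a_gt1.
  assert (Hgen : forall p q : Z, (0 < q)%Z -> a * IZR q <> IZR p).
  { clear p q Hq E. intros p q Hq E.
    assert (0 < IZR q) by (apply IZR_lt; exact Hq).
    assert (0 < IZR p) by (rewrite <- E; apply Rmult_lt_0_compat; lra).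
    apply lt_IZR in H1.
    rewrite <- (Z2Nat.id q), <- (Z2Nat.id p), <- !INR_IZR_INZ in E by lia.
    eapply irr_nat; [|exact E]; lia. }
  destruct (Z_lt_le_dec 0 q) as [Hl|Hl].
  - exact (Hgen p q Hl E).
  - apply (Hgen (- p)%Z (- q)%Z); [lia|]. rewrite !opp_IZR, <- E. ring.
Qed.

Lemma irr_sub : forall x c, irr x -> irr (x - IZR c).
Proof.
  intros x c H p q Hq E. apply (H (p + c * q)%Z q Hq).
  rewrite plus_IZR, mult_IZR, <- E. ring.
Qed.

Lemma irr_neq0 : forall x, irr x -> x <> 0.
Proof. intros x H E. apply (H 0%Z 1%Z); [discriminate| rewrite E; ring]. Qed.

Lemma irr_inv : forall x, irr x -> irr (/ x).
Proof.
  intros x H p q Hq E. pose proof (irr_neq0 x H) as Hx.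
  destruct (Z.eq_dec p 0) as [Hp|Hp].
  - subst. apply Rmult_integral in E. destruct E as [E|E].
    + apply (Rinv_neq_0_compat x Hx E).
    + apply eq_IZR_R0 in E. contradiction.
  - apply (H q p Hp). rewrite <- E. field. exact Hx.
Qed.

Lemma irr_rem : forall n, irr (cf_rem n).
Proof.
  induction n; simpl; [exact irr_a | apply irr_inv, irr_sub, IHn].
Qed.

Lemma frac_pos : forall n, 0 < cf_rem n - IZR (cf_quot n) < 1.
Proof.
  intros n. pose proof (base_Int_part (cf_rem n)) as [H1 H2].
  pose proof (irr_neq0 _ (irr_sub _ (cf_quot n) (irr_rem n))) as H3.
  unfold cf_quot in *. split; [|lra].
  destruct (Rle_lt_or_eq_dec _ _ H1); [lra|]. exfalso; apply H3; lra.
Qed.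

Lemma rem_gt1 : forall n, 1 < cf_rem (S n).
Proof.
  intros n. pose proof (frac_pos n). change (cf_rem (S n)) with (/ (cf_rem n - IZR (cf_quot n))).
  rewrite <- Rinv_1. apply Rinv_lt_contravar; nra.
Qed.

Lemma quot_ge1 : forall n, 1 <= IZR (cf_quot (S n)).
Proof.
  intros n. pose proof (rem_gt1 n). pose proof (base_Int_part (cf_rem (S n))) as [H1 H2].
  unfold cf_quot. apply IZR_le.
  assert (0 < IZR (Int_part (cf_rem (S n)))) by lra. apply lt_IZR in H0. lia.
Qed.

Fixpoint cf_den_pair (n : nat) : Z * Z :=
  match n with
  | O => (1%Z, 0%Z)
  | S m => let (x, y) := cf_den_pair m in ((cf_quot (S m) * x + y)%Z, x)
  end.

Lemma num_S : forall m, cf_num_pair (S m) =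
  ((cf_quot (S m) * fst (cf_num_pair m) + snd (cf_num_pair m))%Z, fst (cf_num_pair m)).
Proof. intros m. change (cf_num_pair (S m)) with
  (let (x, y) := cf_num_pair m in ((cf_quot (S m) * x + y)%Z, x)).
  destruct (cf_num_pair m); reflexivity. Qed.

Lemma den_S : forall m, cf_den_pair (S m) =
  ((cf_quot (S m) * fst (cf_den_pair m) + snd (cf_den_pair m))%Z, fst (cf_den_pair m)).
Proof. intros m. change (cf_den_pair (S m)) with
  (let (x, y) := cf_den_pair m in ((cf_quot (S m) * x + y)%Z, x)).
  destruct (cf_den_pair m); reflexivity. Qed.

Definition P n := IZR (fst (cf_num_pair n)).
Definition Pp n := IZR (snd (cf_num_pair n)).
Definition Q n := IZR (fst (cf_den_pair n)).
Definition Qp n := IZR (snd (cf_den_pair n)).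
Definition cc n := IZR (cf_quot n).

Lemma P_S n : P (S n) = cc (S n) * P n + Pp n.
Proof. unfold P, Pp, cc; rewrite num_S; simpl fst; rewrite plus_IZR, mult_IZR; reflexivity. Qed.
Lemma Pp_S n : Pp (S n) = P n.
Proof. unfold P, Pp; rewrite num_S; reflexivity. Qed.
Lemma Q_S n : Q (S n) = cc (S n) * Q n + Qp n.
Proof. unfold Q, Qp, cc; rewrite den_S; simpl fst; rewrite plus_IZR, mult_IZR; reflexivity. Qed.
Lemma Qp_S n : Qp (S n) = Q n.
Proof. unfold Q, Qp; rewrite den_S; reflexivity. Qed.

Lemma rem_S n : cf_rem (S n) = / (cf_rem n - cc n).
Proof. reflexivity. Qed.

Lemma ident : forall n, a * (Q n * cf_rem (S n) + Qp n) = P n * cf_rem (S n) + Pp n.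
Proof.
  induction n.
  - pose proof (frac_pos 0) as Hf. unfold cc in *.
    rewrite rem_S. change (cf_rem 0) with a in *.
    unfold Q, Qp, P, Pp, cc; simpl fst; simpl snd. unfold cf_quot in *.
    change (cf_rem 0) with a in *. field. lra.
  - pose proof (frac_pos (S n)) as Hf. fold (cc (S n)) in Hf.
    rewrite P_S, Pp_S, Q_S, Qp_S, (rem_S (S n)).
    set (x := cf_rem (S n)) in *. set (c := cc (S n)) in *.
    assert (Hx : x = c + (x - c)) by ring. rewrite Hx in IHn.
    set (f := x - c) in *.
    replace (a * ((c * Q n + Qp n) * / f + Q n)) with (a * (Q n * (c + f) + Qp n) * / f)
      by (field; lra).
    rewrite IHn. field. lra.
Qed.

Lemma det : forall n, P n * Qp n - Pp n * Q n = (-1) ^ (S n).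
Proof.
  induction n.
  - unfold P, Pp, Q, Qp; simpl. ring.
  - rewrite P_S, Pp_S, Q_S, Qp_S.
    replace ((cc (S n) * P n + Pp n) * Q n - P n * (cc (S n) * Q n + Qp n))
      with (- (P n * Qp n - Pp n * Q n)) by ring.
    rewrite IHn. simpl. ring.
Qed.

Lemma Qb : forall n, 1 <= Q n /\ 0 <= Qp n /\ INR n + 1 <= Q n + Qp n.
Proof.
  induction n.
  - unfold Q, Qp; simpl. lra.
  - rewrite Q_S, Qp_S, S_INR. pose proof (quot_ge1 n) as Hc. fold (cc (S n)) in Hc.
    destruct IHn as [H1 [H2 H3]]. nra.
Qed.

Lemma Q_ge : forall n, INR n <= Q n.
Proof.
  destruct n.
  - pose proof (Qb 0). simpl. lra.
  - rewrite Q_S, S_INR. pose proof (quot_ge1 n) as Hc. fold (cc (S n)) in Hc.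
    destruct (Qb n) as [H1 [H2 H3]]. nra.
Qed.

Lemma eps_id : forall n, (a * Q n - P n) * (Q n * cf_rem (S n) + Qp n) = (-1) ^ n.
Proof.
  intros n.
  replace ((a * Q n - P n) * (Q n * cf_rem (S n) + Qp n))
    with (Q n * (a * (Q n * cf_rem (S n) + Qp n)) - P n * (Q n * cf_rem (S n) + Qp n)) by ring.
  rewrite ident.
  replace (Q n * (P n * cf_rem (S n) + Pp n) - P n * (Q n * cf_rem (S n) + Qp n))
    with (- (P n * Qp n - Pp n * Q n)) by ring.
  rewrite det. simpl. ring.
Qed.

Lemma Int_part_eq : forall z x, IZR z <= x < IZR z + 1 -> Int_part x = z.
Proof.
  intros z x [H1 H2]. unfold Int_part.
  rewrite <- (tech_up x (z + 1)); [lia | rewrite plus_IZR; lra | rewrite plus_IZR; lra].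
Qed.

Lemma MinR_in : forall l, l <> nil -> In (MinRlist l) l.
Proof.
  induction l as [|x l IH]; intros H; [congruence|].
  destruct l as [|y l']; [left; reflexivity|].
  change (MinRlist (x :: y :: l')) with (Rmin x (MinRlist (y :: l'))).
  unfold Rmin; destruct (Rle_dec x (MinRlist (y :: l'))); [left; reflexivity|].
  right; apply IH; discriminate.
Qed.

Lemma Splus_iff : forall K l, In l (Splus K) <-> (1 <= l <= K)%nat /\ 0 < g K l.
Proof.
  intros K l. unfold Splus. rewrite filter_In, in_seq.
  destruct (Rlt_dec 0 (g K l)); split; intros H;
    first [split; [lia|assumption] | split; [lia|reflexivity] | destruct H; discriminate | destruct H; contradiction | tauto].
Qed.

Lemma g_pos : forall K l, (1 <= l)%nat -> INR K / a < INR l ->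
  g K l = a - INR K / INR l /\ 0 < a - INR K / INR l.
Proof.
  intros K l Hl H. pose proof a_gt1.
  assert (0 < INR l) by (apply lt_0_INR; lia).
  assert (0 < a - INR K / INR l).
  { replace (a - INR K / INR l) with (a * (INR l - INR K / a) / INR l) by (field; lra).
    apply Rdiv_lt_0_compat; [apply Rmult_lt_0_compat|]; lra. }
  split; [|exact H2]. unfold g. apply Rmax_right. lra.
Qed.

Lemma g_nonpos : forall K l, (1 <= l)%nat -> INR l <= INR K / a -> g K l = 0.
Proof.
  intros K l Hl H. pose proof a_gt1.
  assert (0 < INR l) by (apply lt_0_INR; lia).
  unfold g. apply Rmax_left.
  assert (INR K / INR l >= a); [|lra].
  apply Rle_ge. replace (INR K / INR l) with (a * (INR K / a) / INR l) by (field; lra).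
  replace a with (a * INR l / INR l) at 1 by (field; lra).
  unfold Rdiv. apply Rmult_le_compat_r; [left; apply Rinv_0_lt_compat; lra|].
  apply Rmult_le_compat_l; lra.
Qed.

Lemma div_anti : forall K l1 l2, 0 < l2 -> l2 <= l1 -> INR K / l1 <= INR K / l2.
Proof.
  intros. unfold Rdiv. apply Rmult_le_compat_l; [apply pos_INR|].
  apply Rinv_le_contravar; lra.
Qed.

Section K.
Variable K : nat.
Hypothesis HK : (1 <= K)%nat.

Let x := INR K / a.
Let F := Int_part x.

Lemma x_pos : 0 < x.
Proof. pose proof a_gt1. unfold x. apply Rdiv_lt_0_compat; [apply lt_0_INR; lia| lra]. Qed.

Lemma x_lt_K : x < INR K.
Proof.
  pose proof a_gt1. assert (1 <= INR K) by (apply (le_INR 1); lia). unfold x.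
  apply (Rmult_lt_reg_r a); [lra|]. unfold Rdiv; rewrite Rmult_assoc, Rinv_l by lra. nra.
Qed.

Lemma F_bounds : IZR F <= x < IZR F + 1.
Proof. pose proof (base_Int_part x). unfold F. lra. Qed.

Lemma F_ne : IZR F <> x.
Proof.
  intro E. pose proof a_gt1. pose proof x_pos.
  apply (irr_a (Z.of_nat K) F).
  - intro E2. rewrite E2 in E. simpl in E. lra.
  - rewrite <- INR_IZR_INZ, E. unfold x. field. lra.
Qed.

Lemma F_nonneg : (0 <= F)%Z.
Proof.
  pose proof F_bounds. pose proof x_pos.
  assert (-1 < IZR F) by lra. apply lt_IZR in H1. lia.
Qed.

Lemma lstar_INR : INR (lstar K) = IZR F + 1.
Proof.
  unfold lstar, flr. fold x. fold F. rewrite plus_INR, INR_IZR_INZ, Z2Nat.id by apply F_nonneg.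
  simpl. ring.
Qed.

Lemma lstar_le : (1 <= lstar K <= K)%nat.
Proof.
  pose proof F_bounds. pose proof x_lt_K.
  assert (IZR F < IZR (Z.of_nat K)) by (rewrite <- INR_IZR_INZ; lra).
  apply lt_IZR in H1. pose proof F_nonneg. unfold lstar, flr. fold x. fold F. lia.
Qed.

Lemma in_Splus_ge : forall l, In l (Splus K) -> IZR F + 1 <= INR l /\ INR l <= INR K /\ (1 <= l)%nat
   /\ x < INR l.
Proof.
  intros l H. apply Splus_iff in H as [Hl Hg].
  assert (Hx : x < INR l).
  { destruct (Rlt_le_dec x (INR l)) as [h|h]; [exact h|].
    rewrite (g_nonpos K l) in Hg; [lra|lia|exact h]. }
  pose proof F_bounds.
  assert (IZR F < IZR (Z.of_nat l)) by (rewrite <- INR_IZR_INZ; lra).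
  apply lt_IZR in H0.
  assert (IZR (F + 1) <= IZR (Z.of_nat l)) by (apply IZR_le; lia).
  rewrite plus_IZR, <- INR_IZR_INZ in H1.
  split; [exact H1|]. split; [apply le_INR; lia|]. split; [lia|exact Hx].
Qed.

Lemma K_in : In K (Splus K) /\ g K K = a - 1.
Proof.
  pose proof x_lt_K. pose proof a_gt1.
  assert (1 <= INR K) by (apply (le_INR 1); lia).
  destruct (g_pos K K HK H) as [H2 H3].
  assert (g K K = a - 1) by (rewrite H2; field; lra).
  split; [|exact H4]. apply Splus_iff. split; [lia|lra].
Qed.

Lemma lstar_in : In (lstar K) (Splus K) /\ g K (lstar K) = a - INR K / INR (lstar K).
Proof.
  pose proof F_bounds. pose proof lstar_le. pose proof lstar_INR.
  assert (x < INR (lstar K)) by lra.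
  destruct (g_pos K (lstar K) ltac:(lia) H2) as [H3 H4].
  split; [|exact H3]. apply Splus_iff. split; [lia|lra].
Qed.

Lemma gmax_eq : gmax K = a - 1.
Proof.
  destruct K_in as [Hin Hg].
  apply Rle_antisym.
  - unfold gmax. assert (Hne : exists y, In y (map (g K) (Splus K))).
    { exists (g K K). apply in_map. exact Hin. }
    pose proof (MaxRlist_P2 _ Hne) as Hm.
    apply in_map_iff in Hm as [l [E Hl]]. rewrite <- E.
    destruct (in_Splus_ge l Hl) as [h1 [h2 [h3 h4]]].
    destruct (g_pos K l h3 h4) as [e _]. rewrite e.
    assert (1 <= INR K) by (apply (le_INR 1); lia).
    replace (a - 1) with (a - INR K / INR K) by (field; lra).
    assert (0 < INR l) by (apply lt_0_INR; lia).
    pose proof (div_anti K (INR K) (INR l) ltac:(lra) h2). lra.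
  - rewrite <- Hg. unfold gmax. apply MaxRlist_P1. apply in_map. exact Hin.
Qed.

Lemma gmin_eq : gmin K = a - INR K / INR (lstar K).
Proof.
  destruct lstar_in as [Hin Hg].
  apply Rle_antisym.
  - rewrite <- Hg. unfold gmin. apply MinRlist_P1. apply in_map. exact Hin.
  - unfold gmin. assert (Hne : map (g K) (Splus K) <> nil).
    { intro E. assert (In (g K (lstar K)) (map (g K) (Splus K))) by (apply in_map; exact Hin).
      rewrite E in H. exact H. }
    pose proof (MinR_in _ Hne) as Hm.
    apply in_map_iff in Hm as [l [E Hl]]. rewrite <- E.
    destruct (in_Splus_ge l Hl) as [h1 [h2 [h3 h4]]].
    destruct (g_pos K l h3 h4) as [e _]. rewrite e.
    pose proof F_nonneg. apply IZR_le in H. rewrite lstar_INR.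
    pose proof (div_anti K (INR l) (IZR F + 1) ltac:(lra) h1). lra.
Qed.

Lemma rK_bounds : 0 < rK K < 1.
Proof.
  pose proof (base_fp x) as [h1 h2]. pose proof F_ne.
  unfold rK. fold x. split; [|exact h2].
  change F with (Int_part x) in H. unfold frac_part in *. lra.
Qed.

Lemma Theta_eq : Theta K = (a - 1) / a * ((IZR (flr K) + 1) / (1 - rK K)).
Proof.
  unfold Theta. rewrite gmax_eq, gmin_eq, lstar_INR.
  unfold rK, flr, frac_part. fold x. fold F.
  pose proof F_bounds. pose proof F_nonneg. apply IZR_le in H0. pose proof a_gt1.
  assert (0 < a * (IZR F + 1) - INR K).
  { assert (INR K = a * x) by (unfold x; field; lra). rewrite H2. nra. }
  unfold x in *. field. repeat split; try lra.
Qed.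

Lemma Theta_lower : (a - 1) * INR K / (a * a) < Theta K.
Proof.
  rewrite Theta_eq. pose proof rK_bounds as HR. pose proof F_bounds as HF. pose proof a_gt1.
  unfold rK, flr, frac_part in HR |- *. fold x in HR |- *. fold F in HR |- *.
  pose proof F_nonneg as HF0. apply IZR_le in HF0.
  set (y := 1 - (x - IZR F)) in *.
  assert (0 < y <= 1) by (unfold y; lra).
  assert (E : (IZR F + 1) / y = (IZR F + 1) + (IZR F + 1) * (1 - y) * / y) by (field; lra).
  assert (0 <= (IZR F + 1) * (1 - y) * / y).
  { apply Rmult_le_pos; [apply Rmult_le_pos; lra|left; apply Rinv_0_lt_compat; lra]. }
  replace ((a - 1) * INR K / (a * a)) with ((a - 1) / a * x) by (unfold x; field; lra).
  apply Rmult_lt_compat_l; [apply Rdiv_lt_0_compat; lra|]. lra.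
Qed.

End K.

Lemma big_Theta : forall M K, (1 <= K)%nat -> INR K > M * a * a / (a - 1) -> M < Theta K.
Proof.
  intros M K HK H. pose proof a_gt1. pose proof (Theta_lower K HK).
  apply Rle_lt_trans with ((a - 1) / (a * a) * (M * a * a / (a - 1))).
  { right. field. lra. }
  eapply Rlt_trans; [|exact H1].
  replace ((a - 1) * INR K / (a * a)) with ((a - 1) / (a * a) * INR K) by (field; lra).
  apply Rmult_lt_compat_l; [apply Rdiv_lt_0_compat; nra|lra].
Qed.

Lemma seq_facts : forall n, exists e, 0 < e /\ e * (INR n + 1) < 1 /\
  (1 <= Z.to_nat (cf_num (2 * n + 2)))%nat /\
  INR n < INR (Z.to_nat (cf_num (2 * n + 2))) /\
  rK (Z.to_nat (cf_num (2 * n + 2))) = 1 - e / a.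
Proof.
  intros n. set (m := (2 * n + 2)%nat).
  pose proof a_gt1 as Ha. pose proof (Q_ge m) as HQ. pose proof (Qb m) as [HQ1 [HQp _]].
  pose proof (rem_gt1 m) as Hx. pose proof (eps_id m) as He.
  replace ((-1) ^ m) with 1 in He
    by (unfold m; replace (2 * n + 2)%nat with (2 * (n + 1))%nat by lia; rewrite pow_1_even; reflexivity).
  set (D := Q m * cf_rem (S m) + Qp m) in *.
  set (e := a * Q m - P m) in *.
  assert (HD : Q m < D) by (unfold D; nra).
  assert (Hm : INR m = 2 * INR n + 2) by (unfold m; rewrite plus_INR, mult_INR; simpl; ring).
  assert (He0 : 0 < e) by nra.
  assert (He1 : e < 1) by nra.
  assert (HP : P m > Q m - 1) by (unfold e in *; nra).
  assert (HPz : (0 < cf_num m)%Z).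
  { apply lt_IZR. change (IZR (cf_num m)) with (P m). lra. }
  assert (HK : INR (Z.to_nat (cf_num m)) = P m).
  { rewrite INR_IZR_INZ, Z2Nat.id by lia. reflexivity. }
  exists e. split; [exact He0|]. split; [nra|]. split; [lia|]. split; [lra|].
  unfold rK. rewrite HK.
  assert (HI : Int_part (P m / a) = (fst (cf_den_pair m) - 1)%Z).
  { apply Int_part_eq. rewrite minus_IZR. change (IZR (fst (cf_den_pair m))) with (Q m).
    replace (P m / a) with (Q m - e / a) by (unfold e; field; lra).
    assert (0 < e / a) by (apply Rdiv_lt_0_compat; lra).
    assert (e / a < 1).
    { apply (Rmult_lt_reg_r a); [lra|]. unfold Rdiv; rewrite Rmult_assoc, Rinv_l by lra. lra. }
    lra. }
  unfold frac_part. rewrite HI, minus_IZR. change (IZR (fst (cf_den_pair m))) with (Q m).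
  unfold e. field. lra.
Qed.

Theorem mainTheorem18 :
  (forall K : nat, (1 <= K)%nat ->
     (* (1) maximum a - 1 attained at l = K *)
     (In K (Splus K) /\ g K K = a - 1 /\ gmax K = a - 1) /\
     (* (1) minimum a - K / l_*(K) attained at l_*(K) = floor(K/a) + 1 *)
     (In (lstar K) (Splus K) /\ gmin K = a - INR K / INR (lstar K)) /\
     (* (2) K/a = floor(K/a) + r_K with r_K in (0,1), and the formula for Theta_K *)
     (0 < rK K < 1 /\
      Theta K = (a - 1) / a * ((IZR (flr K) + 1) / (1 - rK K)))) /\
  (* (3) (Theta_K) is unbounded *)
  (forall M : R, exists K : nat, (1 <= K)%nat /\ M < Theta K) /\
  (* along K = p_{2n+2} (= 3, 19, 84, 1054, ...): r_K -> 1^- and Theta_K -> oo *)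
  (forall n : nat, rK (Z.to_nat (cf_num (2 * n + 2))) < 1) /\
  Un_cv (fun n => rK (Z.to_nat (cf_num (2 * n + 2)))) 1 /\
  cv_infty (fun n => Theta (Z.to_nat (cf_num (2 * n + 2)))).
Proof.
  pose proof a_gt1 as Ha.
  split.
  { intros K HK.
    destruct (K_in K HK) as [h1 h2]. destruct (lstar_in K HK) as [h3 _].
    split; [split; [exact h1|split; [exact h2|apply gmax_eq; exact HK]]|].
    split; [split; [exact h3|apply gmin_eq; exact HK]|].
    split; [apply rK_bounds; exact HK|apply Theta_eq; exact HK]. }
  split.
  { intros M. destruct (INR_unbounded (M * a * a / (a - 1))) as [N HN].
    exists (S N). split; [lia|]. apply big_Theta; [lia|]. rewrite S_INR. lra. }
  split.
  { intros n. unfold rK. apply base_fp. }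
  split.
  { intros eps Heps. destruct (INR_unbounded (/ eps)) as [N HN].
    exists N. intros n Hn. destruct (seq_facts n) as [e [He0 [He1 [_ [_ Hr]]]]].
    unfold R_dist. rewrite Hr.
    replace (1 - e / a - 1) with (- (e / a)) by ring.
    rewrite Rabs_Ropp, Rabs_pos_eq by (left; apply Rdiv_lt_0_compat; lra).
    assert (e / a < e).
    { apply (Rmult_lt_reg_r a); [lra|]. unfold Rdiv; rewrite Rmult_assoc, Rinv_l by lra. nra. }
    assert (INR N <= INR n) by (apply le_INR; lia).
    assert (1 < eps * (INR n + 1)).
    { assert (eps * / eps = 1) by (field; lra). nra. }
    nra. }
  { intros M. destruct (INR_unbounded (M * a * a / (a - 1))) as [N HN].
    exists N. intros n Hn. destruct (seq_facts n) as [e [_ [_ [HK1 [HK2 _]]]]].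
    apply big_Theta; [exact HK1|].
    assert (INR N <= INR n) by (apply le_INR; lia). lra. }
Qed.
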